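(* There exists a constant $c$ such that $\alpha_k(m)\le m^c$ for all $k,m\in\mathbf N$.
   Context: For $k,m\in\mathbf N=\{1,2,\dots\}$, $\alpha_k(m)$ is the number of $k$-tuples $(m_1,\dots,m_k)$ of integers $m_i\ge2$ with $m_1m_2\cdots m_k=m$. *)

(* Defs.v *)
From mathcomp Require Import all_boot.
From Stdlib Require Import Reals.

(* For m >= 1 every such m_i divides m, so m_i <= m; we therefore range the
   tuples over {ffun 'I_k -> 'I_(m.+1)} (values 0..m), which loses no tuple. *)
Definition alpha (k m : nat) : nat :=
  #|[set f : {ffun 'I_k -> 'I_(m.+1)} |
      [forall i, 2 <= nat_of_ord (f i)] && (\prod_(i < k) nat_of_ord (f i) == m)]|.

(* Main.v *)
Require Import Defs.
From mathcomp Require Import all_boot zify.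
From Stdlib Require Import Reals.

Definition A (k N m : nat) : nat :=
  #|[set f : {ffun 'I_k -> 'I_N} |
      [forall i, 2 <= nat_of_ord (f i)] && (\prod_(i < k) nat_of_ord (f i) == m)]|.

Lemma sum_bound (m N : nat) :
  \sum_(j < N | 2 <= j) (m %/ j) * (m %/ j) <= m * m.
Proof.
have key : forall n, n.+1 * (\sum_(j < n.+2 | 2 <= j) (m %/ j) * (m %/ j)) <= n * (m * m).
  elim=> [|n IH].
    by rewrite big_mkcond !big_ord_recr big_ord0 /=.
  rewrite (big_mkcond _ (fun j : 'I_n.+3 => _)) big_ord_recr /= -big_mkcond /=.
  set S := \sum_(j < n.+2 | 2 <= j) _ in IH *.
  set x := m %/ n.+2.
  have hx : x * n.+2 <= m by rewrite /x leq_divM.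
  have hx2 : (x * x) * (n.+1 * n.+2) <= m * m.
    have := leq_mul hx hx; nia.
  rewrite -(leq_pmul2l (ltn0Sn n.+1)).
  have H2 := leq_mul (leqnn n.+3) IH.
  nia.
case: N => [|[|n]]; first by rewrite big_ord0.
  by rewrite big_mkcond big_ord_recr big_ord0.
have := key n.
set S := \sum_(j < n.+2 | 2 <= j) _. nia.
Qed.

Lemma A_bound k : forall N m, A k N m <= m * m.
Proof.
elim: k => [|k IH] N m.
  rewrite /A; case: m => [|m].
    rewrite leqn0 cards_eq0; apply/eqP/setP => f.
    by rewrite !inE big_ord0 andbF.
  apply: leq_trans (subset_leq_card (subsetT _)) _.
  rewrite cardsT card_ffun.
  have -> : #|'I_0| = 0 by rewrite card_ord.
  rewrite expn0. nia.
rewrite /A -sum1_card.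
rewrite (partition_big (fun f : {ffun 'I_k.+1 -> 'I_N} => f ord0) predT) //=.
apply: leq_trans (sum_bound m N).
rewrite [X in _ <= X]big_mkcond /=.
apply: leq_sum => j _.
rewrite sum1_card.
case: ifP => hj; last first.
  rewrite leqn0; apply/eqP; apply: eq_card0 => f /=.
  rewrite unfold_in inE; apply/negP => /andP [/andP [/forallP H _] /eqP E].
  by move: (H ord0); rewrite E hj.
set D := (fun _ => _).
pose g (f : {ffun 'I_k.+1 -> 'I_N}) : {ffun 'I_k -> 'I_N} := [ffun i => f (lift ord0 i)].
have ginj : {in D &, injective g}.
  move=> f1 f2; rewrite /D /= => /andP [_ /eqP E1] /andP [_ /eqP E2] Eg.
  apply/ffunP => i; case: (unliftP ord0 i) => [i'|] ->; last by rewrite E1 E2.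
  by have := congr1 (fun h : {ffun 'I_k -> 'I_N} => h i') Eg; rewrite /g !ffunE.
rewrite -(card_in_imset ginj).
apply: leq_trans (IH N (m %/ j)).
apply: subset_leq_card; apply/subsetP => h /imsetP [f Df ->].
move: Df; rewrite unfold_in /= inE => /andP [/andP [/forallP H /eqP P] /eqP E].
rewrite inE; apply/andP; split.
  by apply/forallP => i; rewrite /g ffunE.
rewrite big_ord_recl E in P.
have -> : \prod_(i < k) g f i = \prod_(i < k) f (lift ord0 i).
  by apply: eq_bigr => i _; rewrite /g ffunE.
by rewrite -P mulKn // (leq_trans _ hj).
Qed.

Open Scope R_scope.

Theorem lemma4p3 :
  exists c : R, forall k m : nat, leq 1 k -> leq 1 m ->
    INR (alpha k m) <= Rpower (INR m) c.
Proof.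
exists (INR 2) => k m _ hm.
have hpos : 0 < INR m by apply: lt_0_INR; apply/ltP.
rewrite Rpower_pow //= Rmult_1_r -mult_INR.
apply: le_INR; apply/leP.
rewrite multE.
exact: (A_bound k m.+1 m).
Qed.
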